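(* Let $(\Sigma_+,\Sigma_-,N_1,N_2,N_3)$ be a solution of the Wainwright–Hsu system satisfying the constraint, with $N_1<0$ and $N_2,N_3>0$. Then $N_1(N_2+N_3)$ does not converge to $0$ as $\tau\to\infty$.
   Context: Wainwright–Hsu system: for functions $N_1,N_2,N_3,\Sigma_+,\Sigma_-$ of $\tau\in\mathbb{R}$ (prime denotes $d/d\tau$), $N_1'=(q-4\Sigma_+)N_1$, $N_2'=(q+2\Sigma_++2\sqrt3\Sigma_-)N_2$, $N_3'=(q+2\Sigma_+-2\sqrt3\Sigma_-)N_3$, $\Sigma_+'=-(2-q)\Sigma_+-3S_+$, $\Sigma_-'=-(2-q)\Sigma_--3S_-$, where $q=2(\Sigma_+^2+\Sigma_-^2)$, $S_+=\frac12[(N_2-N_3)^2-N_1(2N_1-N_2-N_3)]$, $S_-=\frac{\sqrt3}{2}(N_3-N_2)(N_1-N_2-N_3)$, together with the constraint $\Sigma_+^2+\Sigma_-^2+\frac34[N_1^2+N_2^2+N_3^2-2(N_1N_2+N_2N_3+N_1N_3)]=1$. Solutions with these sign conditions exist for all $\tau\in\mathbb{R}$. *)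

(* Defs.v *)
From Stdlib Require Import Reals.
From Coquelicot Require Import Coquelicot.
Open Scope R_scope.

Definition WH_q (Sp Sm : R) : R := 2 * (Sp ^ 2 + Sm ^ 2).

Definition WH_Splus (N1 N2 N3 : R) : R :=
  / 2 * ((N2 - N3) ^ 2 - N1 * (2 * N1 - N2 - N3)).

Definition WH_Sminus (N1 N2 N3 : R) : R :=
  sqrt 3 / 2 * (N3 - N2) * (N1 - N2 - N3).

Definition WH_solution (N1 N2 N3 Sp Sm : R -> R) : Prop :=
  forall t : R,
    is_derive N1 t ((WH_q (Sp t) (Sm t) - 4 * Sp t) * N1 t) /\
    is_derive N2 t ((WH_q (Sp t) (Sm t) + 2 * Sp t + 2 * sqrt 3 * Sm t) * N2 t) /\
    is_derive N3 t ((WH_q (Sp t) (Sm t) + 2 * Sp t - 2 * sqrt 3 * Sm t) * N3 t) /\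
    is_derive Sp t (- (2 - WH_q (Sp t) (Sm t)) * Sp t
                    - 3 * WH_Splus (N1 t) (N2 t) (N3 t)) /\
    is_derive Sm t (- (2 - WH_q (Sp t) (Sm t)) * Sm t
                    - 3 * WH_Sminus (N1 t) (N2 t) (N3 t)).

Definition WH_constraint (N1 N2 N3 Sp Sm : R -> R) : Prop :=
  forall t : R,
    Sp t ^ 2 + Sm t ^ 2
    + 3 / 4 * (N1 t ^ 2 + N2 t ^ 2 + N3 t ^ 2
               - 2 * (N1 t * N2 t + N2 t * N3 t + N1 t * N3 t)) = 1.

(* Main.v *)
Require Import Defs.
From Stdlib Require Import Reals.
From Coquelicot Require Import Coquelicot.
From Stdlib Require Import Lra Psatz.
Open Scope R_scope.

Lemma Dmult (f g : R -> R) (x df dg : R) : is_derive f x df -> is_derive g x dg ->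
  is_derive (fun t => f t * g t) x (df * g x + f x * dg).
Proof. intros H1 H2. apply (is_derive_mult f g x df dg H1 H2). intros; apply Rmult_comm. Qed.

Lemma Dplus (f g : R -> R) (x df dg : R) : is_derive f x df -> is_derive g x dg ->
  is_derive (fun t => f t + g t) x (df + dg).
Proof. intros H1 H2. apply (is_derive_plus f g x df dg H1 H2). Qed.

Lemma Dminus (f g : R -> R) (x df dg : R) : is_derive f x df -> is_derive g x dg ->
  is_derive (fun t => f t - g t) x (df - dg).
Proof. intros H1 H2. apply (is_derive_minus f g x df dg H1 H2). Qed.

Lemma Dexp (g : R -> R) (x dg : R) : is_derive g x dg ->
  is_derive (fun t => exp (g t)) x (dg * exp (g x)).
Proof. intros H. apply (is_derive_comp exp g x (exp (g x)) dg); auto. apply is_derive_exp. Qed.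

Lemma Dext (f : R -> R) (x l l' : R) : is_derive f x l -> l = l' -> is_derive f x l'.
Proof. intros H ->; exact H. Qed.

Lemma incr (f df : R -> R) (a b : R) : (forall t, is_derive f t (df t)) ->
  (forall t, a <= t <= b -> 0 <= df t) -> a <= b -> f a <= f b.
Proof.
  intros Hd Hp Hab.
  destruct (MVT_gen f a b df) as [c [Hc Heq]].
  - intros; apply Hd.
  - intros x _. apply continuity_pt_filterlim.
    apply (ex_derive_continuous (K:=R_AbsRing) (V:=R_NormedModule) f x).
    eexists; apply Hd.
  - rewrite Rmin_left in Hc by lra. rewrite Rmax_right in Hc by lra.
    assert (0 <= df c) by (apply Hp; lra). nra.
Qed.

Lemma alg (n1 n2 n3 sp sm s : R) : s*s = 3 -> 0 < s -> n1 < 0 -> 0 < n2 -> 0 < n3 ->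
  sp ^ 2 + sm ^ 2 + 3 / 4 * (n1 ^ 2 + n2 ^ 2 + n3 ^ 2
               - 2 * (n1 * n2 + n2 * n3 + n1 * n3)) = 1 ->
  n1 ^ 2 <= 1/3 -> - (n1 * (n2 + n3)) <= 1/6 ->
  let q := 2 * (sp ^ 2 + sm ^ 2) in
  let dn2 := (q + 2 * sp + 2 * s * sm) * n2 in
  let dn3 := (q + 2 * sp - 2 * s * sm) * n3 in
  let dsm := - (2 - q) * sm - 3 * (s / 2 * (n3 - n2) * (n1 - n2 - n3)) in
  let dG := ((dsm * (n2 - n3) + sm * (dn2 - dn3)) * (n2 + n3) - sm * (n2 - n3) * (dn2 + dn3)) / (n2 + n3) ^ 2 in
  0 <= 4 * q - 4 * sp - (2 / s) * dG.
Proof.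
  intros Hs Hs0 H1 H2 H3 Hc Hn1 Hp q dn2 dn3 dsm dG.
  set (D := n2 - n3). set (P := n2 + n3).
  assert (HP : 0 < P) by (unfold P; lra).
  set (u := sm * D / P).
  set (a := 2 / s * (2 - q)).
  assert (E : 4 * q - 4 * sp - (2 / s) * dG =
     8*sp^2 + 4*sm^2 - 4*sp + 3*D^2 + 4*u^2 + a*u - 3*D^2*n1/P).
  { unfold dG, dsm, dn2, dn3, u, a, q, D, P. field. split; lra. }
  rewrite E.
  assert (Ha2 : a^2 = 4/3 * (2-q)^2).
  { unfold a. field_simplify; [| lra]. rewrite <- Hs. field. lra. }
  assert (HD2 : 3 * D^2 = 4 - 4*sp^2 - 4*sm^2 - 3*n1^2 + 6*n1*P) by (unfold D, P; nra).
  assert (Hq0 : 0 <= q) by (unfold q; nra).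
  assert (Hq2 : q <= 2).
  { unfold q. assert (0 <= D^2) by nra. assert (0 <= n1*P * (-1)) by (unfold P; nra). nra. }
  assert (Hsq : 0 <= (2*u + a/4)^2) by apply pow2_ge_0.
  assert (Hn : 0 <= - (3 * D^2 * n1 / P)).
  { assert (0 <= D^2) by apply pow2_ge_0. unfold Rdiv. 
    assert (0 < / P) by (apply Rinv_0_lt_compat; lra).
    assert (0 <= D^2 * / P) by (apply Rmult_le_pos; lra). nra. }
  assert (Hm : - (n1 * P) <= 1/6) by (unfold P; lra).
  assert (Hb : (2-q)^2 <= 4) by nra.
  assert (Hua : 4*u^2 + a*u >= - 1/3) by nra.
  assert (Hsp : 0 <= (2*sp-1)^2) by apply pow2_ge_0.
  lra.
Qed.


Theorem mainTheorem15 (N1 N2 N3 Sp Sm : R -> R) :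
  WH_solution N1 N2 N3 Sp Sm ->
  WH_constraint N1 N2 N3 Sp Sm ->
  (forall t : R, N1 t < 0 /\ 0 < N2 t /\ 0 < N3 t) ->
  ~ is_lim (fun t => N1 t * (N2 t + N3 t)) p_infty 0.
Proof.
  intros Hsol Hcon Hsg Hlim.
  apply is_lim_spec in Hlim. simpl in Hlim.
  assert (Hs : sqrt 3 * sqrt 3 = 3) by (apply sqrt_sqrt; lra).
  assert (Hs0 : 0 < sqrt 3) by (apply sqrt_lt_R0; lra).
  set (s := sqrt 3) in *.
  assert (Hs1 : 1 <= s) by nra.
  assert (Hbd : forall t, Sm t ^ 2 <= 1 /\ Sp t ^ 2 + Sm t ^ 2 <= 1).
  { intros t. specialize (Hcon t). destruct (Hsg t) as [a [b c]].
    assert (0 <= (N2 t - N3 t)^2) by apply pow2_ge_0.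
    assert (0 <= N1 t ^ 2) by apply pow2_ge_0.
    assert (0 <= Sp t ^ 2) by apply pow2_ge_0.
    assert (0 <= - N1 t * (N2 t + N3 t)) by nra.
    split; nra. }
  assert (HM : forall t, 0 <= t -> N1 t * N2 t * N3 t <= N1 0 * N2 0 * N3 0).
  { intros t Ht.
    assert (H := incr (fun t => -1 * (N1 t * N2 t * N3 t))
       (fun t => -1 * (3 * WH_q (Sp t) (Sm t) * (N1 t * N2 t * N3 t))) 0 t).
    simpl in H.
    cut (-1 * (N1 0 * N2 0 * N3 0) <= -1 * (N1 t * N2 t * N3 t)). lra.
    apply H; [| | lra].
    - intros x. destruct (Hsol x) as [d1 [d2 [d3 _]]].
      apply is_derive_scal.
      eapply Dext. apply Dmult. apply Dmult. exact d1. exact d2. exact d3.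
      simpl. unfold WH_q. ring.
    - intros x _. destruct (Hsg x) as [a [b c]]. unfold WH_q.
      assert (0 <= Sp x ^ 2) by apply pow2_ge_0.
      assert (0 <= Sm x ^ 2) by apply pow2_ge_0.
      assert (N1 x * N2 x < 0) by nra.
      assert (N1 x * N2 x * N3 x < 0) by nra.
      nra. }
  set (c := - (N1 0 * N2 0 * N3 0)).
  assert (Hc : 0 < c).
  { unfold c. destruct (Hsg 0) as [a [b d]].
    assert (N1 0 * N2 0 < 0) by nra. nra. }
  assert (He1 : 0 < Rmin (1/6) c) by (apply Rmin_pos; lra).
  destruct (Hlim (mkposreal _ He1)) as [T1 HT1]. simpl in HT1.
  set (T := Rmax T1 0 + 1).
  assert (Hsmall : forall t, T <= t -> N1 t ^ 2 <= 1/3 /\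
                   - (N1 t * (N2 t + N3 t)) <= 1/6).
  { intros t Ht.
    assert (Ht1 : T1 < t) by (unfold T in Ht; pose proof (Rmax_l T1 0); lra).
    assert (Ht0 : 0 <= t) by (unfold T in Ht; pose proof (Rmax_r T1 0); lra).
    specialize (HT1 t Ht1). rewrite Rminus_0_r in HT1.
    pose proof (HM t Ht0) as HMt. fold c in HMt.
    destruct (Hsg t) as [a [b d]].
    set (f := N1 t * (N2 t + N3 t)) in *.
    assert (Hf : 0 < - f) by (unfold f; nra).
    rewrite Rabs_left in HT1 by lra.
    pose proof (Rmin_l (1/6) c). pose proof (Rmin_r (1/6) c).
    assert (Hf2 : f^2 <= 1/6 * c) by nra.
    assert (HV : N1 t * N1 t * N2 t * N3 t <= f^2 / 4).
    { unfold f. assert (0 <= N1 t ^ 2 * (N2 t - N3 t)^2) by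
        (apply Rmult_le_pos; apply pow2_ge_0). nra. }
    assert (HMt' : N1 t * N2 t * N3 t <= - c) by (unfold c; lra).
    assert (HV2 : - N1 t * c <= N1 t * N1 t * N2 t * N3 t).
    { assert (0 <= (- N1 t) * (- c - N1 t * N2 t * N3 t)) by
        (apply Rmult_le_pos; lra). nra. }
    assert (- N1 t <= 1/24) by nra.
    split; nra. }
  set (G := fun t => Sm t * (N2 t - N3 t) / (N2 t + N3 t)).
  set (F := fun t => N1 t * N1 t * N2 t * N3 t * exp (- (2 / s) * G t)).
  set (K := fun t =>
    let q := 2 * (Sp t ^ 2 + Sm t ^ 2) in
    let dn2 := (q + 2 * Sp t + 2 * s * Sm t) * N2 t in
    let dn3 := (q + 2 * Sp t - 2 * s * Sm t) * N3 t in
    let dsm := - (2 - q) * Sm t - 3 * (s / 2 * (N3 t - N2 t) * (N1 t - N2 t - N3 t)) in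
    let dG := ((dsm * (N2 t - N3 t) + Sm t * (dn2 - dn3)) * (N2 t + N3 t)
               - Sm t * (N2 t - N3 t) * (dn2 + dn3)) / (N2 t + N3 t) ^ 2 in
    4 * q - 4 * Sp t - (2 / s) * dG).
  assert (HdF : forall t, is_derive F t
     (N1 t * N1 t * N2 t * N3 t * exp (- (2 / s) * G t) * K t)).
  { intros t. destruct (Hsol t) as [d1 [d2 [d3 [_ d5]]]].
    destruct (Hsg t) as [a [b d]].
    unfold F. eapply Dext.
    { apply Dmult. apply Dmult. apply Dmult. apply Dmult.
      exact d1. exact d1. exact d2. exact d3.
      apply Dexp. apply is_derive_scal. unfold G. apply is_derive_div.
      - apply Dmult. exact d5. apply Dminus. exact d2. exact d3.
      - apply Dplus. exact d2. exact d3.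
      - lra. }
    unfold K, WH_q, WH_Sminus. fold s. field. lra. }
  assert (HK : forall t, T <= t -> 0 <= K t).
  { intros t Ht. destruct (Hsmall t Ht) as [h1 h2]. destruct (Hsg t) as [a [b d]].
    apply (alg (N1 t) (N2 t) (N3 t) (Sp t) (Sm t) s); auto. }
  assert (HFmono : forall t, T <= t -> F T <= F t).
  { intros t Ht. apply (incr F _ T t HdF); [| lra].
    intros x Hx. destruct (Hsg x) as [a [b d]].
    apply Rmult_le_pos; [| apply HK; lra].
    apply Rmult_le_pos; [| left; apply exp_pos].
    assert (N1 x * N1 x > 0) by nra. left.
    apply Rmult_lt_0_compat; [| lra]. apply Rmult_lt_0_compat; lra. }
  assert (HFT : 0 < F T).
  { unfold F. destruct (Hsg T) as [a [b d]].
    assert (N1 T * N1 T > 0) by nra.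
    apply Rmult_lt_0_compat; [| apply exp_pos].
    apply Rmult_lt_0_compat; [| lra]. apply Rmult_lt_0_compat; lra. }
  assert (He2 : 0 < Rmin 1 (F T / exp 2)).
  { apply Rmin_pos; [lra|]. apply Rdiv_lt_0_compat; [lra | apply exp_pos]. }
  destruct (Hlim (mkposreal _ He2)) as [T2 HT2]. simpl in HT2.
  set (t := Rmax T T2 + 1).
  assert (Ht : T <= t) by (unfold t; pose proof (Rmax_l T T2); lra).
  assert (Ht2 : T2 < t) by (unfold t; pose proof (Rmax_r T T2); lra).
  specialize (HT2 t Ht2). rewrite Rminus_0_r in HT2.
  specialize (HFmono t Ht).
  destruct (Hsg t) as [a [b d]].
  destruct (Hbd t) as [hsm _].
  assert (HG1 : - (2 / s) * G t <= 2).
  { unfold G.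
    assert (H1 : - (Sm t * (N2 t - N3 t)) <= N2 t + N3 t).
    { assert ((Sm t * (N2 t - N3 t))^2 <= (N2 t + N3 t)^2).
      { assert (0 <= (N2 t - N3 t)^2) by apply pow2_ge_0.
        assert ((N2 t - N3 t)^2 <= (N2 t + N3 t)^2) by nra.
        assert (Sm t ^2 * (N2 t - N3 t)^2 <= 1 * (N2 t - N3 t)^2) by
          (apply Rmult_le_compat_r; lra).
        nra. }
      nra. }
    assert (H2 : - (Sm t * (N2 t - N3 t) / (N2 t + N3 t)) <= 1).
    { unfold Rdiv. rewrite Ropp_mult_distr_l.
      apply (Rmult_le_reg_r (N2 t + N3 t)); [lra|].
      rewrite Rmult_assoc, Rinv_l by lra. lra. }
    assert (0 < 2 / s) by (apply Rdiv_lt_0_compat; lra).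
    assert (2 / s <= 2).
    { apply (Rmult_le_reg_r s); [lra|]. unfold Rdiv. rewrite Rmult_assoc, Rinv_l by lra. nra. }
    nra. }
  assert (Hexp : exp (- (2 / s) * G t) <= exp 2).
  { destruct (Req_dec (- (2 / s) * G t) 2) as [E|E]; [rewrite E; lra|].
    left. apply exp_increasing. lra. }
  set (f := N1 t * (N2 t + N3 t)) in *.
  assert (Hf : 0 < - f) by (unfold f; nra).
  rewrite Rabs_left in HT2 by lra.
  pose proof (Rmin_l 1 (F T / exp 2)). pose proof (Rmin_r 1 (F T / exp 2)).
  assert (Hf2 : f^2 <= F T / exp 2) by nra.
  assert (HV : N1 t * N1 t * N2 t * N3 t <= f^2 / 4).
  { unfold f. assert (0 <= N1 t ^ 2 * (N2 t - N3 t)^2) by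
      (apply Rmult_le_pos; apply pow2_ge_0). nra. }
  assert (HV0 : 0 < N1 t * N1 t * N2 t * N3 t).
  { assert (N1 t * N1 t > 0) by nra.
    apply Rmult_lt_0_compat; [| lra]. apply Rmult_lt_0_compat; lra. }
  assert (HFt : F t <= f^2 / 4 * exp 2).
  { unfold F. apply Rmult_le_compat; try lra. left; apply exp_pos. }
  assert (f^2 * exp 2 <= F T).
  { pose proof (exp_pos 2).
    apply (Rmult_le_compat_r (exp 2)) in Hf2; [|lra].
    unfold Rdiv in Hf2. rewrite Rmult_assoc, Rinv_l in Hf2 by lra. lra. }
  lra.
Qed.
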